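(* Let $X$ and $Y$ be Hausdorff spaces such that $X\times Y$ is normal. Then $(C(X,Y),\tau_\Gamma)$ is a regular space.
   Context: For topological spaces $X,Y$, $C(X,Y)$ denotes the set of continuous maps $X\to Y$; each $f\in C(X,Y)$ is identified with its graph $\{(x,f(x)):x\in X\}\subset X\times Y$. For $G$ open in $X\times Y$ let $F_G=\{f\in C(X,Y): f\subset G\}$. The graph topology $\tau_\Gamma$ on $C(X,Y)$ is the topology having the sets $F_G$ ($G$ open in $X\times Y$) as a base. *)

(* Defs.v *)
From Stdlib Require Import Classical.



Record topology (X : Type) := Topology {
  is_open : (X -> Prop) -> Prop;
  open_full : is_open (fun _ => True);
  open_inter : forall U V, is_open U -> is_open V -> is_open (fun x => U x /\ V x);
  open_union : forall (F : (X -> Prop) -> Prop),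
      (forall U, F U -> is_open U) -> is_open (fun x => exists U, F U /\ U x)
}.
Arguments is_open {X} t _.

Definition is_closed {X} (T : topology X) (A : X -> Prop) : Prop :=
  is_open T (fun x => ~ A x).

Definition continuous {X Y} (TX : topology X) (TY : topology Y) (f : X -> Y) : Prop :=
  forall V, is_open TY V -> is_open TX (fun x => V (f x)).

(* separation axioms (Engelking's conventions: regular and normal include T1) *)
Definition T1_space {X} (T : topology X) : Prop :=
  forall x y : X, x <> y -> exists U, is_open T U /\ U x /\ ~ U y.

Definition hausdorff {X} (T : topology X) : Prop :=
  forall x y : X, x <> y -> exists U V, is_open T U /\ is_open T V /\ U x /\ V y /\
    (forall z, U z -> V z -> False).

Definition regular_space {X} (T : topology X) : Prop :=
  T1_space T /\
  forall (A : X -> Prop) (x : X), is_closed T A -> ~ A x ->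
    exists U V, is_open T U /\ is_open T V /\ U x /\ (forall a, A a -> V a) /\
      (forall z, U z -> V z -> False).

Definition normal_space {X} (T : topology X) : Prop :=
  T1_space T /\
  forall (A B : X -> Prop), is_closed T A -> is_closed T B ->
    (forall z, A z -> B z -> False) ->
    exists U V, is_open T U /\ is_open T V /\ (forall a, A a -> U a) /\
      (forall b, B b -> V b) /\ (forall z, U z -> V z -> False).

Definition prod_open {X Y} (TX : topology X) (TY : topology Y) (W : X * Y -> Prop) : Prop :=
  forall p, W p -> exists U V, is_open TX U /\ is_open TY V /\ U (fst p) /\ V (snd p) /\
    (forall x y, U x -> V y -> W (x, y)).

Lemma prod_open_full {X Y} (TX : topology X) (TY : topology Y) :
  prod_open TX TY (fun _ => True).
Proof.
  intros p _. exists (fun _ => True), (fun _ => True).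
  repeat split; try apply open_full; auto.
Qed.

Lemma prod_open_inter {X Y} (TX : topology X) (TY : topology Y) U V :
  prod_open TX TY U -> prod_open TX TY V -> prod_open TX TY (fun p => U p /\ V p).
Proof.
  intros HU HV p [Up Vp].
  destruct (HU p Up) as [A1 [B1 [HA1 [HB1 [HA1p [HB1p H1]]]]]].
  destruct (HV p Vp) as [A2 [B2 [HA2 [HB2 [HA2p [HB2p H2]]]]]].
  exists (fun x => A1 x /\ A2 x), (fun y => B1 y /\ B2 y).
  repeat split; try apply open_inter; auto; firstorder.
Qed.

Lemma prod_open_union {X Y} (TX : topology X) (TY : topology Y)
  (F : (X * Y -> Prop) -> Prop) :
  (forall U, F U -> prod_open TX TY U) -> prod_open TX TY (fun p => exists U, F U /\ U p).
Proof.
  intros HF p [U [FU Up]].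
  destruct (HF U FU p Up) as [A [B [HA [HB [HAp [HBp H]]]]]].
  exists A, B. repeat split; auto. intros x y Ax By. exists U; auto.
Qed.

Definition prod_topology {X Y} (TX : topology X) (TY : topology Y) : topology (X * Y) :=
  @Topology (X * Y) (prod_open TX TY) (prod_open_full TX TY)
    (@prod_open_inter X Y TX TY) (@prod_open_union X Y TX TY).

Definition Cmap {X Y} (TX : topology X) (TY : topology Y) : Type :=
  { f : X -> Y | continuous TX TY f }.

(* f ⊂ G : the graph of f lies in G *)
Definition graph_in {X Y} (f : X -> Y) (G : X * Y -> Prop) : Prop :=
  forall x, G (x, f x).

Definition F_G {X Y} (TX : topology X) (TY : topology Y) (G : X * Y -> Prop)
  : Cmap TX TY -> Prop :=
  fun f => graph_in (proj1_sig f) G.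

Definition graph_open {X Y} (TX : topology X) (TY : topology Y) (S : Cmap TX TY -> Prop) : Prop :=
  forall f, S f -> exists G, is_open (prod_topology TX TY) G /\ F_G TX TY G f /\
    (forall g, F_G TX TY G g -> S g).

Lemma graph_open_full {X Y} (TX : topology X) (TY : topology Y) :
  graph_open TX TY (fun _ => True).
Proof.
  intros f _. exists (fun _ => True). split; [apply open_full|]. split; [intros x; exact I|auto].
Qed.

Lemma graph_open_inter {X Y} (TX : topology X) (TY : topology Y) U V :
  graph_open TX TY U -> graph_open TX TY V -> graph_open TX TY (fun f => U f /\ V f).
Proof.
  intros HU HV f [Uf Vf].
  destruct (HU f Uf) as [G1 [HG1 [F1 S1]]].
  destruct (HV f Vf) as [G2 [HG2 [F2 S2]]].
  exists (fun p => G1 p /\ G2 p). split; [apply open_inter; auto|].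
  split; [intros x; split; [apply F1|apply F2]|].
  intros g Hg. split; [apply S1|apply S2]; intros x; apply (Hg x).
Qed.

Lemma graph_open_union {X Y} (TX : topology X) (TY : topology Y)
  (F : (Cmap TX TY -> Prop) -> Prop) :
  (forall U, F U -> graph_open TX TY U) -> graph_open TX TY (fun f => exists U, F U /\ U f).
Proof.
  intros HF f [U [FU Uf]].
  destruct (HF U FU f Uf) as [G [HG [Ff S]]].
  exists G. repeat split; auto. intros g Hg. exists U; auto.
Qed.

Definition graph_topology {X Y} (TX : topology X) (TY : topology Y) : topology (Cmap TX TY) :=
  @Topology (Cmap TX TY) (graph_open TX TY) (graph_open_full TX TY)
    (@graph_open_inter X Y TX TY) (@graph_open_union X Y TX TY).

(* Main.v *)
Require Import Defs.
From Stdlib Require Import Classical FunctionalExtensionality PropExtensionality ProofIrrelevance.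

Lemma open_ext {X} (T : topology X) (U V : X -> Prop) :
  is_open T U -> (forall x, U x <-> V x) -> is_open T V.
Proof.
  intros H E. replace V with U; auto.
  apply functional_extensionality; intros x; apply propositional_extensionality; auto.
Qed.

Lemma haus_T1 {X} (T : topology X) : hausdorff T -> forall x y, x <> y ->
  exists U, is_open T U /\ U x /\ ~ U y.
Proof.
  intros H x y n. destruct (H x y n) as [U [V [HU [HV [Ux [Vy D]]]]]].
  exists U; repeat split; auto. intros Uy; exact (D y Uy Vy).
Qed.

Lemma punct_open {X Y} (TX : topology X) (TY : topology Y) (x : X) (W : X * Y -> Prop) :
  hausdorff TX -> is_open (prod_topology TX TY) W ->
  is_open (prod_topology TX TY) (fun p => fst p <> x \/ W p).
Proof.
  intros HX HW. simpl. intros p [Hp|Hp].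
  - destruct (haus_T1 TX HX (fst p) x Hp) as [U [HU [Up nUx]]].
    exists U, (fun _ => True). repeat split; auto. apply open_full.
    intros a b Ua _. left. simpl. intros ->. auto.
  - destruct (HW p Hp) as [U [V [HU [HV [Up [Vp H]]]]]].
    exists U, V. repeat split; auto.
Qed.

Theorem mainTheorem1 (X Y : Type) (TX : topology X) (TY : topology Y) :
  hausdorff TX -> hausdorff TY -> normal_space (prod_topology TX TY) ->
  regular_space (graph_topology TX TY).
Proof.
  intros HX HY [_ HN]. split.
  - intros f g nfg.
    assert (exists x, proj1_sig f x <> proj1_sig g x) as [x0 Hx0].
    { apply NNPP; intro C. apply nfg. destruct f as [f pf], g as [g pg]; simpl in *.
      assert (f = g). { apply functional_extensionality; intro x.
        apply NNPP; intro C'; apply C; exists x; auto. }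
      subst g. f_equal. apply proof_irrelevance. }
    set (W := fun p : X * Y => fst p <> x0 \/ snd p <> proj1_sig g x0).
    assert (OW : is_open (prod_topology TX TY) W).
    { simpl. intros p [Hp|Hp].
      - destruct (haus_T1 TX HX _ _ Hp) as [U [HU [Up nU]]].
        exists U, (fun _ => True). repeat split; auto. apply open_full.
        intros a b Ua _. left. simpl. intros ->. auto.
      - destruct (haus_T1 TY HY _ _ Hp) as [U [HU [Up nU]]].
        exists (fun _ => True), U. repeat split; auto. apply open_full.
        intros a b _ Ub. right. simpl. intros E; rewrite <- E in nU; auto. }
    exists (F_G TX TY W). split; [|split].
    + simpl. intros h Hh. exists W. repeat split; auto.
    + intros x. unfold W; simpl.
      destruct (classic (x = x0)) as [->|n]; [right|left]; auto.
    + intros Hg. destruct (Hg x0) as [H|H]; simpl in H; auto.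
  - intros A f HA nAf.
    simpl in HA. destruct (HA f nAf) as [G [HG [FG SG]]].
    destruct f as [f pf].
    assert (Cgr : is_closed (prod_topology TX TY) (fun p => snd p = f (fst p))).
    { unfold is_closed. simpl. intros [x y] Hp. simpl in Hp.
      destruct (HY y (f x) Hp) as [U1 [V1 [HU1 [HV1 [U1y [V1f D]]]]]].
      exists (fun x' => V1 (f x')), U1. repeat split; auto.
      intros a b Va Ub E. simpl in E. subst b. exact (D _ Ub Va). }
    assert (CG : is_closed (prod_topology TX TY) (fun p => ~ G p)).
    { unfold is_closed. apply (open_ext _ G); auto. intros p; split; intro H; [tauto|].
      apply NNPP; auto. }
    destruct (HN _ _ Cgr CG) as [U [V [HU [HV [AU [BV D]]]]]].
    { intros [x y] E nG. simpl in E. subst y. apply nG. apply (FG x). }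
    exists (F_G TX TY U), (fun g => exists x, V (x, proj1_sig g x)).
    split; [|split; [|split; [|split]]].
    + simpl. intros h Hh. exists U. repeat split; auto.
    + simpl. intros g [x Hx].
      exists (fun p => fst p <> x \/ V p). split; [apply punct_open; auto|].
      split.
      * intros x'. destruct (classic (x' = x)) as [->|n]; [right|left]; auto.
      * intros h Hh. exists x. destruct (Hh x) as [H|H]; simpl in H; [congruence|auto].
    + intros x. apply AU. reflexivity.
    + intros g Ag. apply NNPP; intro C.
      assert (F_G TX TY G g) as Hg.
      { intros x. apply NNPP; intro nG. apply C. exists x. apply BV. auto. }
      exact (SG g Hg Ag).
    + intros g Ug [x Vx]. exact (D _ (Ug x) Vx).
Qed.
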